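(* Let $G=(V,E)$ be a connected simple graph. Then $G^{(\pi)}$ is a tree for every injection $\pi:V\to\mathbb{N}$ if and only if every biconnected component of $G$ is a clique.
   Context: For a vertex $u$, $N(u)=\{v\in V: uv\in E\}$ is its open neighbourhood. Given an injection $\pi:V\to\mathbb{N}$, an ordered pair $(u,v)\in V^2$ is called good with respect to $\pi$ if $uv\in E$, $\pi(u)<\pi(v)$, and $\pi(u)<\pi(w)$ for every $w\in N(u)\cap N(v)$. The graph $G^{(\pi)}=(V,E^{(\pi)})$ is the spanning subgraph of $G$ with edge set $E^{(\pi)}=\{\{u,v\}: (u,v)\text{ is good with respect to }\pi\}$. A biconnected component (block) of $G$ is a maximal connected subgraph of $G$ that has no cut vertex of its own; a bridge with its endpoints is a biconnected component isomorphic to $K_2$. *)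

(* Defs.v *)
From mathcomp Require Import all_boot.
Set Implicit Arguments. Unset Strict Implicit. Unset Printing Implicit Defensive.

Section Graphs.
Variable T : finType.

Definition simple_graph (e : rel T) : Prop := symmetric e /\ irreflexive e.

Definition induced (e : rel T) (S : {set T}) : rel T :=
  fun x y => [&& e x y, x \in S & y \in S].

Definition connected_on (e : rel T) (S : {set T}) : Prop :=
  forall x y, x \in S -> y \in S -> connect (induced e S) x y.

Definition connected_graph (e : rel T) : Prop := forall x y, connect e x y.

Definition cut_vertex_of (e : rel T) (S : {set T}) (v : T) : Prop :=
  v \in S /\ ~ connected_on e (S :\ v).

Definition biconnected_set (e : rel T) (S : {set T}) : Prop :=
  connected_on e S /\ forall v, ~ cut_vertex_of e S v.

Definition block (e : rel T) (S : {set T}) : Prop :=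
  biconnected_set e S /\
  forall S' : {set T}, S \subset S' -> biconnected_set e S' -> S' = S.

Definition clique (e : rel T) (S : {set T}) : Prop :=
  forall x y, x \in S -> y \in S -> x != y -> e x y.

Definition has_cycle (e : rel T) : Prop :=
  exists p : seq T, [/\ 3 <= size p, uniq p & cycle e p].

Definition is_tree (e : rel T) : Prop := connected_graph e /\ ~ has_cycle e.

Definition good (e : rel T) (pi : T -> nat) (u v : T) : bool :=
  [&& e u v, pi u < pi v & [forall w, (e u w && e v w) ==> (pi u < pi w)]].

Definition Gpi (e : rel T) (pi : T -> nat) : rel T :=
  fun u v => good e pi u v || good e pi v u.

End Graphs.

(* Main.v *)
Require Import Defs.
From mathcomp Require Import all_boot zify.
From Stdlib Require Import Classical.
Set Implicit Arguments. Unset Strict Implicit. Unset Printing Implicit Defensive.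

Section G.
Variable T : finType.
Variable e : rel T.
Hypothesis esym : symmetric e.
Hypothesis eirr : irreflexive e.

Definition piS (s : seq T) (v : T) : nat :=
  if v \in s then index v s else size s + enum_rank v.

Lemma piS_inj s : injective (piS s).
Proof.
move=> u v; rewrite /piS.
have hu := index_mem u s; have hv := index_mem v s.
case: ifP => us; case: ifP => vs.
- move=> H; by rewrite -(nth_index u us) H (nth_index u vs).
- rewrite us in hu; move=> H; exfalso; move: hu; by rewrite H ltnNge leq_addr.
- rewrite vs in hv; move=> H; exfalso; move: hv; by rewrite -H ltnNge leq_addr.
- move/addnI => /ord_inj H; exact: enum_rank_inj.
Qed.

Lemma piS_in s v : v \in s -> piS s v = index v s.
Proof. by rewrite /piS => ->. Qed.

Lemma piS_small s v k : k <= size s -> piS s v < k -> v \in s /\ index v s < k.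
Proof.
rewrite /piS; case: ifP => // _ ? ?; lia.
Qed.

Lemma good_intro pi u v : e u v -> pi u < pi v ->
  (forall w, e u w -> e v w -> pi w <= pi u -> False) -> good e pi u v.
Proof.
move=> huv hlt H; rewrite /good huv hlt /=; apply/forallP => w; apply/implyP => /andP [h1 h2].
rewrite ltnNge; apply/negP => h; exact: (H w h1 h2 h).
Qed.

Lemma neq_of_e x y : e x y -> x != y.
Proof. by apply: contraTneq => ->; rewrite eirr. Qed.

Lemma diamond a z d w : e z a -> e z w -> e z d -> e a w -> e w d -> ~~ e a d -> a != d ->
  has_cycle (Gpi e (piS [:: a; d; z; w])).
Proof.
move=> hza hzw hzd haw hwd nad nead.
have nza := neq_of_e hza; have nzw := neq_of_e hzw; have nzd := neq_of_e hzd.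
have naw := neq_of_e haw; have nwd := neq_of_e hwd.
set s := [:: a; d; z; w].
have nez := nza; rewrite eq_sym in nez.
have nwz := nzw; rewrite eq_sym in nwz.
have ndz := nzd; rewrite eq_sym in ndz.
have nwa := naw; rewrite eq_sym in nwa.
have ndw := nwd; rewrite eq_sym in ndw.
have nda := nead; rewrite eq_sym in nda.
have pa : piS s a = 0 by rewrite piS_in ?inE ?eqxx //= eqxx.
have pd : piS s d = 1 by rewrite piS_in ?inE ?eqxx ?orbT //= ?(negbTE nda) ?(negbTE nead) eqxx.
have pz : piS s z = 2 by rewrite piS_in ?inE ?eqxx ?orbT //= ?(negbTE nza) ?(negbTE nez) ?(negbTE nzd) ?(negbTE ndz) eqxx.
have pw : piS s w = 3 by rewrite piS_in ?inE ?eqxx ?orbT //= ?(negbTE naw) ?(negbTE nwa) ?(negbTE nwd) ?(negbTE ndw) ?(negbTE nzw) ?(negbTE nwz) eqxx.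
have small1 : forall x, piS s x <= 1 -> x = a \/ x = d.
  move=> x hx; have [xin] := @piS_small s x 2 isT hx.
  rewrite /= ; case: (a =P x) => [->|_]; first by left.
  by case: (d =P x) => [->|_]; [right|].
have small0 : forall x, piS s x <= 0 -> x = a.
  move=> x hx; have [xin] := @piS_small s x 1 isT hx.
  by rewrite /= ; case: (a =P x) => [->|_].
exists [:: a; z; d; w]; split => //.
  by rewrite /= !inE !negb_or ?nza ?nez ?nead ?nda ?naw ?nwa ?nzd ?ndz ?nzw ?nwz ?nwd ?ndw.
rewrite /= /Gpi andbT.
apply/and4P; split; apply/orP.
- left; apply: good_intro; [by rewrite esym | by rewrite pa pz |].
  move=> x h1 h2; rewrite pa => /small0 hx; subst x; by rewrite eirr in h1.
- right; apply: good_intro; [by rewrite esym | by rewrite pd pz |].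
  move=> x h1 h2; rewrite pd => /small1 [] hx; subst x; [by rewrite esym (negbTE nad) in h1 | by rewrite eirr in h1].
- left; apply: good_intro; [by rewrite esym | by rewrite pd pw |].
  move=> x h1 h2; rewrite pd => /small1 [] hx; subst x; [by rewrite esym (negbTE nad) in h1 | by rewrite eirr in h1].
- right; apply: good_intro; [by [] | by rewrite pa pw |].
  move=> x h1 h2; rewrite pa => /small0 hx; subst x; by rewrite eirr in h1.
Qed.

Lemma piR_small s z w k : z \notin s -> k < size s -> piS (rcons s z) w <= k ->
  w \in s /\ index w s <= k.
Proof.
move=> zs ks hw.
have [] := @piS_small (rcons s z) w k.+1; first by rewrite size_rcons ltnS ltnW.
  by [].
rewrite -cats1 index_cat mem_cat inE; case: ifP => ws //= _.
move=> h; exfalso; move: h; rewrite ltnS => /(leq_trans (leq_addr _ _)); by rewrite leqNgt ks.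
Qed.

Lemma piR_in s z v : v \in s -> piS (rcons s z) v = index v s.
Proof. by move=> vs; rewrite piS_in ?mem_rcons ?inE ?vs ?orbT // -cats1 index_cat vs. Qed.

Lemma piR_z s z : z \notin s -> piS (rcons s z) z = size s.
Proof. by move=> zs; rewrite piS_in ?mem_rcons ?inE ?eqxx // -cats1 index_cat (negbTE zs) /= eqxx addn0. Qed.

Lemma indcycle z s : uniq s -> sorted e s -> z \notin s -> 2 <= size s ->
  e z (head z s) -> e z (last z s) -> ~~ e (head z s) (last z s) ->
  (forall w, w \in s -> e z w -> w = head z s \/ w = last z s) ->
  (forall a b, a \in s -> b \in s -> e a b -> index a s + 2 <= index b s -> False) ->
  has_cycle (Gpi e (piS (rcons s z))).
Proof.
move=> us ss zs s2 hzh hzl nhl Hz NC.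
exists (z :: s); split => //; first by rewrite /= zs us.
rewrite /= rcons_path; apply/andP; split.
- case: s us ss zs s2 hzh hzl nhl Hz NC => [//|h t] us ss zs s2 hzh hzl nhl Hz NC /=.
  rewrite -[h :: rcons t z]/(rcons (h :: t) z).
  apply/andP; split.
    apply/orP; right; apply: good_intro; [by rewrite esym | |].
      by rewrite piR_in ?inE ?eqxx // piR_z //= eqxx.
    have hi0 : index h (h :: t) = 0 by rewrite /= eqxx.
    move=> w h1 h2; rewrite (@piR_in _ z h) ?inE ?eqxx // hi0.
    case/(piR_small zs (ltnW s2)) => win; rewrite leqn0 => /eqP hi.
    have := nth_index z win; rewrite hi /= => hw; by rewrite -hw eirr in h1.
  apply/(pathP z) => i it.
  have ui : index (nth z (h :: t) i) (h :: t) = i by rewrite index_uniq // /= ltnW.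
  have ui1 : index (nth z t i) (h :: t) = i.+1.
    by have := @index_uniq _ z i.+1 (h :: t); rewrite /= ltnS => ->.
  have mi : nth z (h :: t) i \in h :: t by rewrite mem_nth // /= ltnW.
  have mi1 : nth z t i \in h :: t by rewrite inE mem_nth ?orbT.
  have eu : e (nth z (h :: t) i) (nth z t i) by move: ss => /= /(pathP z); apply.
  apply/orP; left; apply: good_intro => //.
    by rewrite !piR_in // ui ui1.
  move=> w h1 h2; rewrite (@piR_in _ _ (nth z (h :: t) i)) // ui.
  case/(piR_small zs) => [|win wi]; first by rewrite /= ltnS ltnW.
  apply: (NC w (nth z t i)) => //; first by rewrite esym.
  rewrite ui1 addn2 ltnS.
  rewrite leq_eqVlt in wi; case/orP: wi => // /eqP wi.
  have := nth_index z win; rewrite wi => hw; by rewrite -hw eirr in h1.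
- have lin : last z s \in s by case: s s2 {us ss zs hzh hzl nhl Hz NC} => //= h t _; rewrite mem_last.
  have li : index (last z s) s = (size s).-1.
    rewrite -nth_last index_uniq //; by case: (size s) s2.
  apply/orP; left; apply: good_intro; [by rewrite esym | |].
    by rewrite piR_in // piR_z // li; case: (size s) s2.
  move=> w h1 h2; rewrite (@piR_in _ _ (last z s)) // li.
  case/(piR_small zs) => [|win wi]; first by case: (size s) s2.
  case: (Hz w win h2) => hw.
    by move: nhl; rewrite -hw esym h1.
  by rewrite hw eirr in h1.
Qed.

Inductive cfg z s : Prop := Cfg of uniq s & sorted e s & z \notin s & 1 < size s &
  e z (head z s) & e z (last z s) & ~~ e (head z s) (last z s).

Lemma cfg_left z s1 w s2 : cfg z (s1 ++ w :: s2) -> s1 != [::] -> e z w ->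
  ~~ e (head z s1) w -> cfg z (rcons s1 w).
Proof.
case=> us ss zs _ hzh _ _ ns1 hzw nhw.
have sub : subseq (rcons s1 w) (s1 ++ w :: s2).
  by rewrite -cats1 cat_subseq // sub1seq inE eqxx.
split.
- exact: subseq_uniq sub us.
- by move: ss; rewrite sorted_cat_cons => /andP [].
- by apply: contra zs; apply: mem_subseq.
- by rewrite size_rcons ltnS lt0n size_eq0.
- by case: s1 ns1 hzh {us ss zs nhw sub}.
- by rewrite last_rcons.
- rewrite last_rcons; by case: s1 ns1 nhw {us ss zs hzh sub}.
Qed.

Lemma cfg_right z s1 w s2 : cfg z (s1 ++ w :: s2) -> s2 != [::] -> e z w ->
  ~~ e w (last w s2) -> cfg z (w :: s2).
Proof.
case=> us ss zs _ _ hzl _ ns2 hzw nhw.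
have sub : subseq (w :: s2) (s1 ++ w :: s2).
  by rewrite -[w :: s2]cat0s cat_subseq // sub0seq.
split.
- exact: subseq_uniq sub us.
- by move: ss; rewrite sorted_cat_cons => /andP [].
- by apply: contra zs; apply: mem_subseq.
- by rewrite /= ltnS lt0n size_eq0.
- by [].
- by move: hzl; rewrite last_cat.
- by [].
Qed.

Lemma cfg_short z s1 a m b s3 : cfg z (s1 ++ a :: m ++ b :: s3) -> e a b ->
  cfg z (s1 ++ a :: b :: s3).
Proof.
case=> us ss zs _ hzh hzl nhl hab.
have sub : subseq (s1 ++ a :: b :: s3) (s1 ++ a :: m ++ b :: s3).
  rewrite cat_subseq //= eqxx -[b :: s3]cat0s cat_subseq //; exact: sub0seq.
split.
- exact: subseq_uniq sub us.
- move: ss; rewrite !sorted_cat_cons => /andP [-> /=]; rewrite cat_path /= hab => /andP [_ /andP [_ ->]]; by [].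
- by apply: contra zs; apply: mem_subseq.
- by rewrite size_cat /= addnS addnS.
- by case: s1 hzh {us ss zs hzl nhl sub}.
- by move: hzl; rewrite !last_cat /= last_cat.
- by move: nhl; rewrite !last_cat /= last_cat; case: s1 {us ss zs hzh hzl sub}.
Qed.

Lemma split_ij (s : seq T) x0 i j : i < j -> j < size s ->
  s = take i s ++ nth x0 s i :: (take (j - i.+1) (drop i.+1 s) ++ nth x0 s j :: drop j.+1 s).
Proof.
move=> ij js.
rewrite -(drop_nth x0 js).
have -> : drop j s = drop (j - i.+1) (drop i.+1 s) by rewrite drop_drop subnK.
by rewrite cat_take_drop -(drop_nth x0) ?(ltn_trans ij) // cat_take_drop.
Qed.

Lemma cfg_hl z s : cfg z s -> head z s != last z s.
Proof.
case=> us _ _ s2 _ _ _; case: s us s2 => [|x [|y r]] //= /andP [xn _] _.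
by apply: contraNneq xn => ->; apply: mem_last.
Qed.

Lemma cfg_false (NoCyc : forall pi, injective pi -> ~ has_cycle (Gpi e pi)) n :
  forall z s, size s <= n -> cfg z s -> False.
Proof.
elim: n => [|n IH] z s sn c.
  by case: c => _ _ _ s2 _ _ _; move: sn; rewrite leqn0 => /eqP h; rewrite h in s2.
have hl := cfg_hl c.
case: (c) => us ss zs s2 hzh hzl nhl.
case: (boolP (has (fun w => e z w && (w != head z s) && (w != last z s)) s)).
  case/hasP => w ws /andP [/andP [hzw nh] nl].
  move: c sn hl us hzh hzl nhl nh nl; case/splitPr: ws => s1 s2' c sn hl us hzh hzl nhl nh nl.
  have ns1 : s1 != [::] by case: s1 {c sn hl us hzh hzl nhl nl} nh => //=; rewrite eqxx.
  have ns2 : s2' != [::].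
    by case: s2' {c sn hl us hzh hzl nhl nh} nl => //=; rewrite last_cat /= eqxx.
  have hh : head z (s1 ++ w :: s2') = head z s1 by case: s1 ns1 {c sn hl us hzh hzl nhl nh nl}.
  have hlst : last z (s1 ++ w :: s2') = last w s2' by rewrite last_cat.
  rewrite hh hlst in hzh hzl nhl hl.
  have szs : size (s1 ++ w :: s2') = size s1 + (size s2').+1 by rewrite size_cat.
  case: (boolP (e (head z s1) w)) => e1; last first.
    apply: (IH z (rcons s1 w)); last exact: cfg_left c ns1 hzw e1.
    rewrite size_rcons; move: sn; rewrite szs; case: (s2') ns2 => // ? ? _ /=; lia.
  case: (boolP (e w (last w s2'))) => e2; last first.
    apply: (IH z (w :: s2')); last exact: cfg_right c ns2 hzw e2.
    move: sn; rewrite szs; case: (s1) ns1 => // ? ? _ /=; lia.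
  exact: (NoCyc _ (@piS_inj _) (diamond hzh hzw hzl e1 e2 nhl hl)).
move/hasPn => Hz'.
have Hz : forall w, w \in s -> e z w -> w = head z s \/ w = last z s.
  move=> w ws hzw; have := Hz' w ws; rewrite hzw /= negb_and !negbK.
  by case/orP => /eqP ->; [left|right].
case: (boolP (has (fun a => has (fun b => e a b && (index a s + 2 <= index b s)) s) s)).
  case/hasP => a as_ /hasP [b bs /andP [hab hij]].
  have ij : index a s < index b s by apply: leq_trans hij; rewrite addn2.
  have js : index b s < size s by rewrite index_mem.
  have c' := c; rewrite (split_ij z ij js) (nth_index z as_) (nth_index z bs) in c'.
  apply: (IH z _ _ (cfg_short c' hab)).
  have := index_mem a s; rewrite as_ => ai.
  rewrite size_cat /= size_drop size_take ai.
  clear c'; move: hij js ij sn; set k := size s; set i := index a s; set j := index b s; move=> *; lia.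
move/hasPn => NC'.
have NC : forall a b, a \in s -> b \in s -> e a b -> index a s + 2 <= index b s -> False.
  move=> a b as_ bs hab hij; have := NC' a as_; move/hasPn => /(_ b bs).
  by rewrite hab hij.
exact: (NoCyc _ (@piS_inj _) (indcycle us ss zs s2 hzh hzl nhl Hz NC)).
Qed.

Lemma induced_sym S : symmetric (induced e S).
Proof. move=> x y; rewrite /induced [e x y]esym; by case: (x \in S); case: (y \in S); rewrite ?andbT ?andbF. Qed.

Lemma path_conn (S : {set T}) x p : path e x p -> x \in S -> all (mem S) p ->
  forall y, y \in x :: p -> connect (induced e S) x y.
Proof.
elim: p x => [|w p IH] x /=.
  by move=> _ _ _ y; rewrite inE => /eqP ->.
move=> /andP [hxw hp] xS /andP [wS aS] y; rewrite inE => /orP [/eqP -> //|yp].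
apply: (@connect_trans _ _ w); first by apply: connect1; rewrite /induced hxw xS.
exact: IH.
Qed.

Lemma seq_conn (S : {set T}) x p : path e x p -> (forall y, (y \in S) = (y \in x :: p)) -> connected_on e S.
Proof.
move=> hp hS a b aS bS.
have xS : x \in S by rewrite hS mem_head.
have aP : all (mem S) p by apply/allP => y yp; rewrite /= hS inE yp orbT.
have ca : connect (induced e S) x a by apply: (path_conn hp xS aP); rewrite -hS.
have cb : connect (induced e S) x b by apply: (path_conn hp xS aP); rewrite -hS.
apply: (@connect_trans _ _ x) cb.
by rewrite (sym_connect_sym (@induced_sym S)).
Qed.

Lemma cycle_bic c : uniq c -> 2 < size c -> cycle e c -> biconnected_set e [set x in c].
Proof.
move=> uc sc cc; split.
  case: c uc sc cc => [//|h t] _ _ /=; rewrite rcons_path => /andP [hp _].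
  by apply: (seq_conn hp) => y; rewrite inE.
move=> v [vC]; apply.
rewrite inE in vC; case: (rot_to vC) => i t ht.
have := cc; rewrite -(rot_cycle i) ht /= rcons_path => /andP [hp _].
have := uc; rewrite -(rot_uniq i) ht /= => /andP [vt _].
have st : size t = (size c).-1 by rewrite -(size_rot i c) ht.
case: t ht hp vt st => [|h' t'] ht hp vt st; first by move: sc; rewrite -(size_rot i c) ht.
move: hp => /= /andP [_ hp].
apply: (seq_conn hp) => y.
rewrite in_setD1 inE -(mem_rot i c) ht in_cons.
case: (y =P v) => [->|_] /=; [by rewrite (negbTE vt) | by []].
Qed.

Lemma ext_block n : forall S : {set T}, #|T| - #|S| <= n -> biconnected_set e S ->
  exists B : {set T}, S \subset B /\ block e B.
Proof.
elim: n => [|n IH] S hn bS.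
  exists S; split => //; split => // S' sub bS'.
  apply/eqP; rewrite eq_sym eqEcard sub /=.
  apply: leq_trans (max_card _) _; by move: hn; rewrite leqn0 subn_eq0.
case: (classic (forall S' : {set T}, S \subset S' -> biconnected_set e S' -> S' = S)) => H.
  by exists S; split.
move: H => /not_all_ex_not [S' /not_all_ex_not [sub /not_all_ex_not [bS' neq]]].
have pr : S \proper S' by rewrite properEneq sub andbT eq_sym; apply/eqP.
have := proper_card pr; have := max_card (mem S') => h1 h2.
case: (IH S') => // [|B [sB blB]]; first lia.
by exists B; split => //; apply: subset_trans sB.
Qed.

Lemma seq_min (s : seq T) (f : T -> nat) : s != [::] -> exists2 m, m \in s & forall x, x \in s -> f m <= f x.
Proof.
elim: s => [//|x s IH] _.
case: (altP (s =P [::])) => [->|ns].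
  by exists x; rewrite ?inE // => y; rewrite inE => /eqP ->.
case: (IH ns) => m ms hm.
case: (leqP (f x) (f m)) => hx.
  exists x; first exact: mem_head.
  move=> y; rewrite inE => /orP [/eqP -> //|ys]; exact: leq_trans hx (hm y ys).
exists m; first by rewrite inE ms orbT.
move=> y; rewrite inE => /orP [/eqP -> |ys]; [exact: ltnW | exact: hm].
Qed.

Lemma Gpi_sub pi : subrel (Gpi e pi) e.
Proof. by move=> u v /orP [/andP [h _] | /andP [h _]] //; rewrite esym. Qed.

Lemma Gpi_conn pi (ipi : injective pi) n : forall u v, e u v -> pi u < pi v -> pi u < n ->
  connect (Gpi e pi) u v.
Proof.
have cs : connect_sym (Gpi e pi) by apply: sym_connect_sym => x y; rewrite /Gpi orbC.
elim: n => [//|n IH] u v huv lt hn.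
case: (boolP (good e pi u v)) => g.
  by apply: connect1; rewrite /Gpi g.
move: g; rewrite /good huv lt /= => /forallPn [w]; rewrite negb_imply => /andP [/andP [h1 h2]].
rewrite -leqNgt => hw.
have wu : pi w < pi u.
  rewrite ltn_neqAle hw andbT; apply/eqP => /ipi hwu; by rewrite hwu eirr in h1.
apply: (@connect_trans _ _ w).
  rewrite cs; apply: IH; [by rewrite esym | by [] | lia].
apply: IH; [by rewrite esym | lia | lia].
Qed.

Lemma back (Hcl : forall S, block e S -> clique e S) (Hc : connected_graph e) pi :
  injective pi -> is_tree (Gpi e pi).
Proof.
move=> ipi; split.
  move=> x y; apply: (connect_sub _ (Hc x y)) => u v huv.
  have cs : connect_sym (Gpi e pi) by apply: sym_connect_sym => a b; rewrite /Gpi orbC.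
  have nuv : pi u != pi v by apply: contraTneq huv => /ipi ->; rewrite eirr.
  case: (ltngtP (pi u) (pi v)) nuv => // hl _.
    exact: (Gpi_conn ipi huv hl (ltnSn _)).
  rewrite cs; apply: (Gpi_conn ipi _ hl (ltnSn _)); by rewrite esym.
case=> c [sc uc cc].
have ce : cycle e c by apply: sub_cycle cc; apply: Gpi_sub.
have [B [sB blB]] := @ext_block #|T| [set x in c] (leq_subr _ _) (cycle_bic uc sc ce).
have cl : forall x y, x \in c -> y \in c -> x != y -> e x y.
  move=> x y xc yc nxy; apply: (Hcl B blB) => //; apply: (subsetP sB); by rewrite inE.
have nc : c != [::] by case: (c) sc.
have [m mc hm] := @seq_min c pi nc.
case: (rot_to mc) => i t ht.
have := cc; rewrite -(rot_cycle i) ht.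
have := uc; rewrite -(rot_uniq i) ht.
have st : size t = (size c).-1 by rewrite -(size_rot i c) ht.
have memt : forall x, x \in t -> x \in c by move=> x xt; rewrite -(mem_rot i) ht inE xt orbT.
case: t ht st memt => [|t1 [|t2 r]] ht st memt; try by move: sc; rewrite -(size_rot i c) ht.
rewrite /= !inE !negb_or => /andP [/andP [n1 /andP [n2 _]] _] /andP [_ /andP [g12 _]].
have t1c := memt t1 (mem_head _ _).
have t2c : t2 \in c by apply: memt; rewrite !inE eqxx orbT.
have e1 : e t1 m by apply: cl => //; rewrite eq_sym.
have e2 : e t2 m by apply: cl => //; rewrite eq_sym.
have lt1 : pi m < pi t1 by rewrite ltn_neqAle hm // andbT; apply: contra n1 => /eqP /ipi ->.
have lt2 : pi m < pi t2 by rewrite ltn_neqAle hm // andbT; apply: contra n2 => /eqP /ipi ->.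
move: g12; rewrite /Gpi /good => /orP [] /and3P [_ _ /forallP /(_ m)]; rewrite e1 e2 /= ltnNge.
  by rewrite ltnW.
by rewrite ltnW.
Qed.

Lemma dist2 (B : {set T}) x p : forall y, path (induced e B) x p -> y = last x p -> x != y ->
  ~~ e x y -> y \in B ->
  exists a z c, [/\ a \in B, z \in B, c \in B, e a z & e z c] /\ (a != c /\ ~~ e a c).
Proof.
elim: p x => [|w p IH] x y /=; first by move=> _ -> /eqP.
move=> /andP [/and3P [hxw xB wB] hp] hy nxy nexy yB.
case: (altP (w =P y)) => [hwy|nwy]; first by move: nexy; rewrite -hwy hxw.
case: (boolP (e w y)) => hwy.
  by exists x, w, y.
exact: IH hp hy nwy hwy yB.
Qed.

Lemma path_induced_in (S : {set T}) x p : path (induced e S) x p -> all (mem S) p.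
Proof.
elim: p x => [//|w p IH] x /= /andP [/and3P [_ _ wS] hp]; by rewrite wS (IH w hp).
Qed.

Lemma forw (H : forall pi, injective pi -> is_tree (Gpi e pi)) S : block e S -> clique e S.
Proof.
move=> [[cS ncut] _] x y xS yS nxy.
apply/negPn/negP => nexy.
have NoCyc : forall pi, injective pi -> ~ has_cycle (Gpi e pi) by move=> pi ipi; case: (H pi ipi).
case/connectP: (cS x y xS yS) => p hp hy.
have [a [z [c [[aS zS cS' haz hzc] [nac neac]]]]] := dist2 hp hy nxy nexy yS.
have cz : connected_on e (S :\ z).
  apply: NNPP => Hn; apply: (ncut z); by split.
have aSz : a \in S :\ z by rewrite in_setD1 aS andbT eq_sym (neq_of_e (y := a)) // esym.
have cSz : c \in S :\ z by rewrite in_setD1 cS' andbT eq_sym (neq_of_e hzc).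
case/connectP: (cz a c aSz cSz) => q hq hc.
case: (shortenP hq) hc => q' hq' uq' sub hc.
apply: (@cfg_false NoCyc (size (a :: q')) z (a :: q') (leqnn _)).
have allq := path_induced_in hq'.
have zq : z \notin a :: q'.
  rewrite inE negb_or eq_sym (neq_of_e haz) /=; apply/negP => zq.
  by move/allP: allq => /(_ z zq); rewrite /= in_setD1 eqxx.
have nq : q' != [::] by case: (q') hc => //= ha; move: nac; rewrite ha eqxx.
split => //.
- by apply: sub_path hq' => u v /and3P [].
- by case: (q') nq.
- by rewrite /= esym.
- by rewrite /= -hc.
- by rewrite /= -hc.
Qed.

End G.

Theorem lemma2 (T : finType) (e : rel T) :
  simple_graph e -> 0 < #|T| -> connected_graph e ->
  ((forall pi : T -> nat, injective pi -> is_tree (Gpi e pi)) <->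
   (forall S : {set T}, block e S -> clique e S)).
Proof.
move=> [esym eirr] _ Hc; split.
  move=> H S; exact: (forw esym eirr H).
move=> Hcl pi ipi; exact: (back esym eirr Hcl Hc ipi).
Qed.
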